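(* Let $X$ be a real Hilbert space, let $T\colon X\to X$ be averaged nonexpansive and boundedly linearly regular, let $\rho>0$, and let $C$ be a nonempty subset of $\operatorname{Fix}T$. Then there exist $\alpha\in[0,1[$, $\beta\in]0,1]$ and $\gamma>0$ such that for every $x$ with $\|x\|\le\rho$: (a) $d_{\operatorname{Fix}T}(Tx)\le\alpha\,d_{\operatorname{Fix}T}(x)$; (b) $\beta\,d^2_{\operatorname{Fix}T}(x)\le\big(d_{\operatorname{Fix}T}(x)-d_{\operatorname{Fix}T}(Tx)\big)^2\le\|x-Tx\|^2$; (c) $d_C^2(Tx)\le d_C^2(x)-\gamma\,d^2_{\operatorname{Fix}T}(x)$. If $T$ is linearly regular, these constants can be chosen independently of $\rho$.
   Context: $T$ is averaged nonexpansive if $T=(1-\lambda)\mathrm{Id}+\lambda N$ with $\lambda\in[0,1[$ and $N$ nonexpansive. $T$ with $\operatorname{Fix}T\neq\varnothing$ is linearly regular if there is $\kappa\ge0$ with $d_{\operatorname{Fix}T}(x)\le\kappa\|x-Tx\|$ for all $x$; boundedly linearly regular if for each $\rho>0$ there is $\kappa\ge0$ with this for all $\|x\|\le\rho$. $d_S$ is the distance to $S$. *)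

(* Defs.v *)
From Stdlib Require Import Reals Lra ClassicalEpsilon.
Open Scope R_scope.

Record RHilbert := {
  hcarrier :> Type;
  vadd : hcarrier -> hcarrier -> hcarrier;
  vscal : R -> hcarrier -> hcarrier;
  vzero : hcarrier;
  vopp : hcarrier -> hcarrier;
  inner : hcarrier -> hcarrier -> R;
  vadd_assoc : forall x y z, vadd x (vadd y z) = vadd (vadd x y) z;
  vadd_comm : forall x y, vadd x y = vadd y x;
  vadd_0 : forall x, vadd x vzero = x;
  vadd_opp : forall x, vadd x (vopp x) = vzero;
  vscal_1 : forall x, vscal 1 x = x;
  vscal_assoc : forall a b x, vscal a (vscal b x) = vscal (a * b) x;
  vscal_distr_v : forall a x y, vscal a (vadd x y) = vadd (vscal a x) (vscal a y);
  vscal_distr_s : forall a b x, vscal (a + b) x = vadd (vscal a x) (vscal b x);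
  inner_sym : forall x y, inner x y = inner y x;
  inner_add_l : forall x y z, inner (vadd x y) z = inner x z + inner y z;
  inner_scal_l : forall a x y, inner (vscal a x) y = a * inner x y;
  inner_pos : forall x, 0 <= inner x x;
  inner_def : forall x, inner x x = 0 -> x = vzero;
  complete : forall u : nat -> hcarrier,
    (forall eps, 0 < eps -> exists N, forall m n, (N <= m)%nat -> (N <= n)%nat ->
        sqrt (inner (vadd (u m) (vopp (u n))) (vadd (u m) (vopp (u n)))) < eps) ->
    exists l, forall eps, 0 < eps -> exists N, forall n, (N <= n)%nat ->
        sqrt (inner (vadd (u n) (vopp l)) (vadd (u n) (vopp l))) < eps
}.

Arguments vadd {_}. Arguments vscal {_}. Arguments vzero {_}.
Arguments vopp {_}. Arguments inner {_}.

Definition vsub {X : RHilbert} (x y : X) : X := vadd x (vopp y).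
Definition norm {X : RHilbert} (x : X) : R := sqrt (inner x x).

Definition is_glb (E : R -> Prop) (m : R) : Prop :=
  (forall r, E r -> m <= r) /\ (forall b, (forall r, E r -> b <= r) -> b <= m).

(* d_S(x) = inf_{s in S} ||x - s||  (meaningful for S nonempty) *)
Definition dist {X : RHilbert} (S : X -> Prop) (x : X) : R :=
  epsilon (inhabits 0)
    (fun d => is_glb (fun r => exists s, S s /\ r = norm (vsub x s)) d).

Definition Fix {X : RHilbert} (T : X -> X) : X -> Prop := fun x => T x = x.

Definition nonexpansive {X : RHilbert} (N : X -> X) : Prop :=
  forall x y, norm (vsub (N x) (N y)) <= norm (vsub x y).

Definition averaged_nonexpansive {X : RHilbert} (T : X -> X) : Prop :=
  exists (lambda : R) (N : X -> X), 0 <= lambda < 1 /\ nonexpansive N /\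
    forall x, T x = vadd (vscal (1 - lambda) x) (vscal lambda (N x)).

Definition linearly_regular {X : RHilbert} (T : X -> X) : Prop :=
  (exists z, Fix T z) /\
  exists kappa, 0 <= kappa /\
    forall x, dist (Fix T) x <= kappa * norm (vsub x (T x)).

Definition boundedly_linearly_regular {X : RHilbert} (T : X -> X) : Prop :=
  (exists z, Fix T z) /\
  forall rho, 0 < rho -> exists kappa, 0 <= kappa /\
    forall x, norm x <= rho -> dist (Fix T) x <= kappa * norm (vsub x (T x)).

Definition lemma3p7_props {X : RHilbert} (T : X -> X) (C : X -> Prop)
    (alpha beta gamma : R) (x : X) : Prop :=
  dist (Fix T) (T x) <= alpha * dist (Fix T) x /\
  beta * (dist (Fix T) x) ^ 2 <= (dist (Fix T) x - dist (Fix T) (T x)) ^ 2 /\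
  (dist (Fix T) x - dist (Fix T) (T x)) ^ 2 <= (norm (vsub x (T x))) ^ 2 /\
  (dist C (T x)) ^ 2 <= (dist C x) ^ 2 - gamma * (dist (Fix T) x) ^ 2.

(* Main.v *)
Require Import Defs.
From Stdlib Require Import Reals Lra Psatz ClassicalEpsilon.
Import Defs.
Open Scope R_scope.

Lemma inner_zero_l (X : RHilbert) (y : X) : inner vzero y = 0.
Proof. pose proof (inner_add_l X vzero vzero y) as h. rewrite vadd_0 in h. lra. Qed.
Lemma inner_opp_l (X : RHilbert) (x y : X) : inner (vopp x) y = - inner x y.
Proof. pose proof (inner_add_l X x (vopp x) y) as h. rewrite vadd_opp, inner_zero_l in h. lra. Qed.
Lemma inner_add_r (X : RHilbert) (x y z : X) : inner x (vadd y z) = inner x y + inner x z.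
Proof. rewrite inner_sym, inner_add_l, (inner_sym X y x), (inner_sym X z x). reflexivity. Qed.
Lemma inner_scal_r (X : RHilbert) a (x y : X) : inner x (vscal a y) = a * inner x y.
Proof. rewrite inner_sym, inner_scal_l, (inner_sym X y x). reflexivity. Qed.
Lemma inner_opp_r (X : RHilbert) (x y : X) : inner x (vopp y) = - inner x y.
Proof. rewrite inner_sym, inner_opp_l, (inner_sym X y x). reflexivity. Qed.
Lemma inner_zero_r (X : RHilbert) (y : X) : inner y vzero = 0.
Proof. rewrite inner_sym. apply inner_zero_l. Qed.

Hint Rewrite inner_add_l inner_add_r inner_scal_l inner_scal_r inner_opp_l inner_opp_r
  inner_zero_l inner_zero_r : ip.

Lemma norm_sq (X : RHilbert) (x : X) : norm x ^ 2 = inner x x.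
Proof. unfold norm. apply pow2_sqrt, inner_pos. Qed.
Lemma norm_nonneg (X : RHilbert) (x : X) : 0 <= norm x.
Proof. apply sqrt_pos. Qed.

Lemma vsub0 (X : RHilbert) (a b : X) : vsub a b = vzero -> a = b.
Proof.
  unfold vsub; intro h.
  assert (h2 : vadd (vopp b) b = vzero) by (rewrite vadd_comm; apply vadd_opp).
  rewrite <- (vadd_0 X a), <- h2, vadd_assoc, h, vadd_comm, vadd_0. reflexivity.
Qed.

Lemma CS (X : RHilbert) (a b : X) : inner a b <= norm a * norm b.
Proof.
  pose proof (norm_nonneg X a). pose proof (norm_nonneg X b).
  destruct (Req_dec (inner b b) 0) as [h|h].
  - apply inner_def in h. subst b. rewrite inner_zero_r. nra.
  - pose proof (inner_pos X b) as hb.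
    set (t := inner a b / inner b b).
    pose proof (inner_pos X (vsub a (vscal t b))) as h1. unfold vsub in h1.
    autorewrite with ip in h1. rewrite (inner_sym X b a) in h1.
    assert (ht : t * inner b b = inner a b) by (unfold t; field; auto).
    assert (hc : inner a b ^ 2 <= inner a a * inner b b).
    { assert (0 < inner b b) by lra. nra. }
    destruct (Rle_dec (inner a b) 0). nra.
    unfold norm. rewrite <- sqrt_mult by apply inner_pos.
    rewrite <- (sqrt_pow2 (inner a b)) by lra. apply sqrt_le_1_alt. exact hc.
Qed.

Lemma tri (X : RHilbert) (x y s : X) : norm (vsub x s) <= norm (vsub x y) + norm (vsub y s).
Proof.
  pose proof (CS X (vsub x y) (vsub y s)) as hc.
  pose proof (norm_sq X (vsub x y)) as h1. pose proof (norm_sq X (vsub y s)) as h2.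
  pose proof (norm_nonneg X (vsub x y)). pose proof (norm_nonneg X (vsub y s)).
  remember (norm (vsub x y)) as A eqn:HA. remember (norm (vsub y s)) as B eqn:HB.
  clear HA HB.
  unfold norm. rewrite <- (sqrt_pow2 (A + B)) by lra. apply sqrt_le_1_alt.
  unfold vsub in *. autorewrite with ip in *.
  rewrite (inner_sym X y x), (inner_sym X s x), (inner_sym X s y) in *. nra.
Qed.

Definition dset {X : RHilbert} (S : X -> Prop) (x : X) :=
  fun r => exists s, S s /\ r = norm (vsub x s).

Lemma dist_glb (X : RHilbert) (S : X -> Prop) x : (exists s, S s) ->
  is_glb (dset S x) (dist S x).
Proof.
  intro hne. unfold dist. apply epsilon_spec.
  destruct (completeness (fun r => dset S x (- r))) as [m [hm1 hm2]].
  - exists 0. intros r [s [_ hr]]. pose proof (norm_nonneg X (vsub x s)). lra.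
  - destruct hne as [s hs]. exists (- norm (vsub x s)). exists s. split; auto. lra.
  - exists (- m). split.
    + intros r hr. assert (- r <= m). { apply hm1. rewrite Ropp_involutive. exact hr. } lra.
    + intros b hb. assert (m <= - b). { apply hm2. intros r hr. specialize (hb _ hr). lra. } lra.
Qed.

Lemma dist_le (X : RHilbert) (S : X -> Prop) x s : S s -> dist S x <= norm (vsub x s).
Proof. intro hs. apply (proj1 (dist_glb X S x (ex_intro _ s hs))). exists s; auto. Qed.

Lemma dist_ge (X : RHilbert) (S : X -> Prop) x b : (exists s, S s) ->
  (forall s, S s -> b <= norm (vsub x s)) -> b <= dist S x.
Proof. intros hne h. apply (proj2 (dist_glb X S x hne)). intros r [s [hs ->]]. auto. Qed.

Lemma dist_nonneg (X : RHilbert) (S : X -> Prop) x : (exists s, S s) -> 0 <= dist S x.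
Proof. intro hne. apply dist_ge; auto. intros. apply norm_nonneg. Qed.

Lemma dist_lip (X : RHilbert) (S : X -> Prop) x y : (exists s, S s) ->
  dist S x <= dist S y + norm (vsub x y).
Proof.
  intro hne. assert (dist S x - norm (vsub x y) <= dist S y); [|lra].
  apply dist_ge; auto. intros s hs. pose proof (dist_le X S x s hs).
  pose proof (tri X x y s). lra.
Qed.

Lemma key (X : RHilbert) (T N : X -> X) lam (Hl : 0 <= lam < 1) (HN : nonexpansive N)
  (HT : forall x, T x = vadd (vscal (1 - lam) x) (vscal lam (N x))) x z (Hz : Fix T z) :
  inner (vsub (T x) z) (vsub (T x) z) <=
  inner (vsub x z) (vsub x z) - (1 - lam) * inner (vsub x (T x)) (vsub x (T x)).
Proof.
  assert (HB : lam * inner (vsub (N x) z) (vsub (N x) z) <= lam * inner (vsub x z) (vsub x z)).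
  { destruct (Req_dec lam 0) as [->|Hl0]. lra.
    assert (Nz : N z = z).
    { unfold Fix in Hz. rewrite HT in Hz.
      assert (hv : forall v, inner (N z) v = inner z v).
      { intro v. pose proof (f_equal (fun u => inner u v) Hz) as h. simpl in h.
        autorewrite with ip in h.
        apply (Rmult_eq_reg_l lam); auto. lra. }
      apply vsub0, inner_def. unfold vsub. autorewrite with ip.
      rewrite (hv (N z)), (hv z), (inner_sym X z (N z)). lra. }
    pose proof (HN x z) as h. rewrite Nz in h. unfold norm in h.
    apply sqrt_le_0 in h; try apply inner_pos. nra. }
  pose proof (inner_pos X (vsub x (N x))) as HD.
  assert (Hp : 0 <= lam * (1 - lam) ^ 2 * inner (vsub x (N x)) (vsub x (N x))).
  { apply Rmult_le_pos; [|exact HD]. apply Rmult_le_pos; [lra|]. apply pow2_ge_0. }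
  rewrite !HT. unfold vsub in *. autorewrite with ip in *.
  rewrite ?(inner_sym X (N x) x), ?(inner_sym X z x), ?(inner_sym X z (N x)) in *.
  nra.
Qed.

Lemma dist_dec (X : RHilbert) (T N : X -> X) lam (Hl : 0 <= lam < 1) (HN : nonexpansive N)
  (HT : forall x, T x = vadd (vscal (1 - lam) x) (vscal lam (N x)))
  (S : X -> Prop) (Hne : exists s, S s) (Hsub : forall s, S s -> Fix T s) x :
  dist S (T x) ^ 2 <= dist S x ^ 2 - (1 - lam) * norm (vsub x (T x)) ^ 2.
Proof.
  pose proof (dist_nonneg X S (T x) Hne).
  pose proof (dist_nonneg X S x Hne).
  assert (hq : 0 <= (1 - lam) * norm (vsub x (T x)) ^ 2) by (apply Rmult_le_pos; nra).
  assert (h : sqrt (dist S (T x) ^ 2 + (1 - lam) * norm (vsub x (T x)) ^ 2) <= dist S x).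
  { apply dist_ge; auto. intros s hs. unfold norm at 2. apply sqrt_le_1_alt.
    pose proof (dist_le X S (T x) s hs). pose proof (norm_nonneg X (vsub (T x) s)).
    pose proof (norm_sq X (vsub (T x) s)). rewrite norm_sq.
    pose proof (key X T N lam Hl HN HT x s (Hsub s hs)). nra. }
  pose proof (pow2_sqrt (dist S (T x) ^ 2 + (1 - lam) * norm (vsub x (T x)) ^ 2)) as hs.
  pose proof (sqrt_pos (dist S (T x) ^ 2 + (1 - lam) * norm (vsub x (T x)) ^ 2)).
  assert (hp : 0 <= dist S (T x) ^ 2 + (1 - lam) * norm (vsub x (T x)) ^ 2) by nra.
  specialize (hs hp). nra.
Qed.

Lemma main_gen (X : RHilbert) (T : X -> X) (HT : averaged_nonexpansive T)
  (C : X -> Prop) (HCne : exists c, C c) (HCsub : forall c, C c -> Fix T c)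
  (Hfix : exists z, Fix T z) (P : X -> Prop) kappa (Hk : 0 <= kappa)
  (Hreg : forall x, P x -> dist (Fix T) x <= kappa * norm (vsub x (T x))) :
  exists alpha beta gamma,
    0 <= alpha < 1 /\ 0 < beta <= 1 /\ 0 < gamma /\
    forall x, P x -> lemma3p7_props T C alpha beta gamma x.
Proof.
  destruct HT as [lam [N [Hl [HN HTe]]]].
  set (e := 1 - lam). set (K := kappa + 1). set (g := e / (K * K)).
  assert (hgK : g * (K * K) = e) by (unfold g, K; field; lra).
  assert (hg0 : 0 < g) by (unfold g, K, e; apply Rdiv_lt_0_compat; nra).
  assert (hg1 : g <= 1) by (unfold K, e in *; nra).
  set (alpha := sqrt (1 - g)).
  assert (ha2 : alpha ^ 2 = 1 - g) by (apply pow2_sqrt; lra).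
  assert (ha0 : 0 <= alpha) by apply sqrt_pos.
  assert (ha1 : alpha < 1) by nra.
  exists alpha, ((1 - alpha) ^ 2), g.
  split; [lra|]. split; [split; nra|]. split; [lra|].
  intros x Px.
  pose proof (dist_dec X T N lam Hl HN HTe (Fix T) Hfix (fun s h => h) x) as H1.
  pose proof (dist_dec X T N lam Hl HN HTe C HCne HCsub x) as HC.
  pose proof (Hreg x Px) as H2.
  pose proof (dist_nonneg X (Fix T) x Hfix) as hd.
  pose proof (dist_nonneg X (Fix T) (T x) Hfix) as hd'.
  pose proof (norm_nonneg X (vsub x (T x))) as hq.
  pose proof (dist_lip X (Fix T) x (T x) Hfix) as H4.
  fold e in H1, HC.
  remember (dist (Fix T) x) as d. remember (dist (Fix T) (T x)) as d'.
  remember (norm (vsub x (T x))) as q.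
  assert (H2' : d <= K * q) by (unfold K; nra).
  assert (H5 : g * d ^ 2 <= e * q ^ 2).
  { assert (d ^ 2 <= (K * q) ^ 2) by nra. nra. }
  assert (Ha : d' <= alpha * d).
  { assert (h6 : d' ^ 2 <= (1 - g) * d ^ 2) by lra.
    assert (h7 : (alpha * d) ^ 2 = (1 - g) * d ^ 2) by (rewrite <- ha2; ring).
    assert (h8 : 0 <= alpha * d) by nra.
    destruct (Rle_dec d' (alpha * d)) as [|hn]; auto.
    assert ((alpha * d) ^ 2 < d' ^ 2) by (apply Rnot_le_lt in hn; nra).
    lra. }
  unfold lemma3p7_props. rewrite <- Heqd, <- Heqd', <- Heqq.
  split; [exact Ha|]. split; [|split].
  - assert ((1 - alpha) * d <= d - d') by nra.
    assert (0 <= (1 - alpha) * d) by nra. nra.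
  - assert (0 <= d - d') by nra. nra.
  - nra.
Qed.

Theorem lemma3p7 (X : RHilbert) (T : X -> X)
  (HT : averaged_nonexpansive T)
  (Hblr : boundedly_linearly_regular T)
  (C : X -> Prop) (HCne : exists c, C c) (HCsub : forall c, C c -> Fix T c) :
  (forall rho, 0 < rho ->
     exists alpha beta gamma,
       0 <= alpha < 1 /\ 0 < beta <= 1 /\ 0 < gamma /\
       forall x, norm x <= rho -> lemma3p7_props T C alpha beta gamma x) /\
  (linearly_regular T ->
     exists alpha beta gamma,
       0 <= alpha < 1 /\ 0 < beta <= 1 /\ 0 < gamma /\
       forall x, lemma3p7_props T C alpha beta gamma x).
Proof.
  destruct Hblr as [Hz Hb]. split.
  - intros rho hr. destruct (Hb rho hr) as [k [hk hreg]].
    exact (main_gen X T HT C HCne HCsub Hz (fun x => norm x <= rho) k hk hreg).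
  - intros [_ [k [hk hreg]]].
    destruct (main_gen X T HT C HCne HCsub Hz (fun _ => True) k hk (fun x _ => hreg x))
      as [a [b [c [h1 [h2 [h3 h4]]]]]].
    exists a, b, c. split; [exact h1|]. split; [exact h2|]. split; [exact h3|]. intro x. apply h4. exact I.
Qed.
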